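(* In the setting below, $\|\mathcal{T}_A\varphi\|_{A_0}\le9\|\varphi\|_{A_0}$ for all $\varphi\in X_N$.
   Context: Standing: $d\ge2$, $m\ge1$, $L\ge3$ odd, $N\ge1$. $\mathbb{T}_N=(\mathbb{Z}/L^N\mathbb{Z})^d$; $X_N$: maps $\mathbb{T}_N\to\mathbb{C}^m$ with zero sum; $\langle\varphi,\psi\rangle=\sum_x\langle\varphi(x),\overline{\psi(x)}\rangle$. $(\nabla_j\varphi)(x)=\varphi(x+e_j)-\varphi(x)$. $A:\mathbb{C}^{m\times d}\to\mathbb{C}^{m\times d}$ linear with $A=A_0+A_1$, $A_0$ Hermitian with $\langle A_0F,F\rangle\ge c_0|F|^2$ ($c_0>0$), $\|A_1\|\le c_0/2$. $(\varphi,\psi)_A=\langle A\nabla\varphi,\nabla\psi\rangle$, $\|\varphi\|_{A_0}=(\varphi,\varphi)_{A_0}^{1/2}$. Let $l\ge3$ be an integer with $l-1<L^N$, $Q=\{1,\dots,l-1\}^d$, $H(Q+x)=\{\varphi\in X_N:\varphi=0\text{ outside }Q+x\}$; $\Pi_{A,x}\varphi$ is the unique $v\in H(Q+x)$ with $(v,\psi)_A=(\varphi,\psi)_A$ for all $\psi\in H(Q+x)$. $\mathcal{T}_A=l^{-d}\sum_{x\in\mathbb{T}_N}\Pi_{A,x}$. *)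

(* Defs.v *)
From HB Require Import structures.
From mathcomp Require Import all_boot all_order all_algebra.
From mathcomp.real_closed Require Import complex.
From Stdlib Require Import ClassicalEpsilon.
Set Implicit Arguments. Unset Strict Implicit. Unset Printing Implicit Defensive.
Import Order.TTheory GRing.Theory Num.Theory.
Local Open Scope ring_scope.
Local Open Scope complex_scope.

Section Defs.
Variables (R : rcfType) (d m n : nat).
(* n plays the role of L^N; the torus (Z/nZ)^d is 'rV['Z_n]_d *)
Local Notation C := R[i].
Local Notation torus := 'rV['Z_n]_d.
Local Notation mat := 'M[C]_(m, d).

Definition field := {ffun torus -> 'cV[C]_m}.

Definition fdot (F G : mat) : C := \sum_i \sum_j F i j * (G i j)^*.

Definition fnorm (F : mat) : R := Num.sqrt (complex.Re (fdot F F)).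

Definition evec (j : 'I_d) : torus := delta_mx 0 j.

Definition grad (phi : field) (x : torus) : mat :=
  \matrix_(i < m, j < d) (phi (x + evec j) i 0 - phi x i 0).

Definition inX (phi : field) : Prop := \sum_x phi x = 0.

Definition formA (A : mat -> mat) (phi psi : field) : C :=
  \sum_x fdot (A (grad phi x)) (grad psi x).

Definition normA (A0 : mat -> mat) (phi : field) : R :=
  Num.sqrt (complex.Re (formA A0 phi phi)).

Definition inQx (l : nat) (x y : torus) : bool :=
  [forall j, (1 <= val ((y - x)%R ord0 j) <= l.-1)%N].

Definition inH (l : nat) (x : torus) (phi : field) : Prop :=
  inX phi /\ forall y, ~~ inQx l x y -> phi y = 0.

Definition isPi (A : mat -> mat) (l : nat) (x : torus) (phi v : field) : Prop :=
  inH l x v /\ forall psi, inH l x psi -> formA A v psi = formA A phi psi.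

(* Pi_{A,x} phi : the (unique, under the standing hypotheses) v with isPi *)
Definition Pi (A : mat -> mat) (l : nat) (x : torus) (phi : field) : field :=
  epsilon (inhabits 0) (isPi A l x phi).

Definition TA (A : mat -> mat) (l : nat) (phi : field) : field :=
  ((l%:R : C) ^- d) *: \sum_x Pi A l x phi.

End Defs.

(* Main.v *)
Require Import Defs.
From HB Require Import structures.
From mathcomp Require Import all_boot all_order all_algebra.
From mathcomp.real_closed Require Import complex.
From Stdlib Require Import ClassicalEpsilon.
From mathcomp Require Import ring lra zify.
Import Order.TTheory GRing.Theory Num.Theory.
Set Implicit Arguments. Unset Strict Implicit. Unset Printing Implicit Defensive.
Local Open Scope ring_scope.
Local Notation "x %:C" := (real_complex _ x) (format "x %:C") : ring_scope.


Section Cplx.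
Variable R : rcfType.
Local Notation C := R[i].
Lemma Re_conj (z : C) : complex.Re (z^*) = complex.Re z.
Proof. by case: z. Qed.
Lemma Re_realM (r : R) (z : C) : complex.Re (r%:C * z) = r * complex.Re z.
Proof. by case: z => a b /=; rewrite mul0r subr0. Qed.
Lemma Re_add (z w : C) : complex.Re (z + w) = complex.Re z + complex.Re w.
Proof. by case: z; case: w. Qed.
Lemma Re_opp (z : C) : complex.Re (- z) = - complex.Re z.
Proof. by case: z. Qed.
Lemma Re_sum (I : Type) (r : seq I) (P : pred I) (F : I -> C) :
  complex.Re (\sum_(i <- r | P i) F i) = \sum_(i <- r | P i) complex.Re (F i).
Proof.
elim/big_rec2: _ => [//|i y1 y2 _ <-]; exact: Re_add.
Qed.
Lemma Re_ge0 (z : C) : 0 <= z -> 0 <= complex.Re z.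
Proof. by rewrite lecE => /andP[_]. Qed.
Lemma conj_real (r : R) : ((r%:C)^*) = r%:C.
Proof. by rewrite conj_Creal // complex_real. Qed.
End Cplx.

Section Fdot.
Variables (R : rcfType) (m d : nat).
Local Notation C := R[i].
Local Notation mat := 'M[C]_(m, d).
Implicit Types X Y Z : mat.

Lemma fdotDl X Y Z : fdot (X + Y) Z = fdot X Z + fdot Y Z.
Proof.
rewrite /fdot -big_split; apply: eq_bigr => i _.
rewrite -big_split; apply: eq_bigr => j _; by rewrite !mxE mulrDl.
Qed.
Lemma fdotZl a X Y : fdot (a *: X) Y = a * fdot X Y.
Proof.
rewrite /fdot mulr_sumr; apply: eq_bigr => i _.
rewrite mulr_sumr; apply: eq_bigr => j _; by rewrite !mxE mulrA.
Qed.
Lemma fdotC X Y : fdot Y X = ((fdot X Y)^*).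
Proof.
rewrite /fdot rmorph_sum; apply: eq_bigr => i _.
rewrite (rmorph_sum (@Num.Def.conjC _)); apply: eq_bigr => j _. rewrite (rmorphM (@Num.Def.conjC _)) mulrC; congr (_ * _); exact/esym/conjCK.
Qed.
Lemma fdotDr X Y Z : fdot X (Y + Z) = fdot X Y + fdot X Z.
Proof.
rewrite /fdot -big_split; apply: eq_bigr => i _.
rewrite -big_split; apply: eq_bigr => j _; by rewrite !mxE rmorphD mulrDr.
Qed.
Lemma fdotZr a X Y : fdot X (a *: Y) = (a^*) * fdot X Y.
Proof.
rewrite /fdot mulr_sumr; apply: eq_bigr => i _.
rewrite mulr_sumr; apply: eq_bigr => j _; by rewrite !mxE rmorphM mulrCA.
Qed.
Lemma fdot0l X : fdot 0 X = 0.
Proof. by rewrite -(scale0r 0) fdotZl mul0r. Qed.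
Lemma fdot0r X : fdot X 0 = 0.
Proof. by rewrite -(scale0r 0) fdotZr conjC0 mul0r. Qed.
Lemma fdotNl X Y : fdot (- X) Y = - fdot X Y.
Proof. by rewrite -scaleN1r fdotZl mulN1r. Qed.
Lemma fdot_suml (I : Type) (r : seq I) (P : pred I) (F : I -> mat) Y :
  fdot (\sum_(i <- r | P i) F i) Y = \sum_(i <- r | P i) fdot (F i) Y.
Proof. elim/big_rec2: _ => [|i y1 y2 _ <-]; [exact: fdot0l | exact: fdotDl]. Qed.
Lemma fdot_sumr (I : Type) (r : seq I) (P : pred I) (F : I -> mat) Y :
  fdot Y (\sum_(i <- r | P i) F i) = \sum_(i <- r | P i) fdot Y (F i).
Proof. elim/big_rec2: _ => [|i y1 y2 _ <-]; [exact: fdot0r | exact: fdotDr]. Qed.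
Lemma fdot_ge0 X : 0 <= fdot X X.
Proof.
apply: sumr_ge0 => i _; apply: sumr_ge0 => j _; exact: mul_conjC_ge0.
Qed.
Lemma Re_fdot_ge0 X : 0 <= complex.Re (fdot X X).
Proof. exact/Re_ge0/fdot_ge0. Qed.
Lemma fnorm_sqr X : fnorm X ^+ 2 = complex.Re (fdot X X).
Proof. by rewrite /fnorm sqr_sqrtr // Re_fdot_ge0. Qed.
Lemma fdot_eq0 X : fdot X X = 0 -> X = 0.
Proof.
move=> h; apply/matrixP => i j; rewrite mxE.
have h1 := fdot_ge0 X.
move: h; rewrite /fdot => /eqP; rewrite psumr_eq0; last first.
  by move=> k _; apply: sumr_ge0 => l _; exact: mul_conjC_ge0.
move=> /allP /(_ i (mem_index_enum _)) /implyP /(_ isT).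
rewrite psumr_eq0; last by move=> l _; exact: mul_conjC_ge0.
move=> /allP /(_ j (mem_index_enum _)) /implyP /(_ isT).
by rewrite -normCK sqrf_eq0 normr_eq0 => /eqP.
Qed.
End Fdot.

Section Quad.
Variables (R : rcfType) (m d : nat).
Local Notation C := R[i].
Local Notation mat := 'M[C]_(m, d).
Variable M : mat -> mat.
Hypothesis hlin : forall a F G, M (a *: F + G) = a *: M F + M G.
Hypothesis hherm : forall F G, fdot (M F) G = fdot F (M G).
Hypothesis hpos : forall F, 0 <= complex.Re (fdot (M F) F).
Local Notation q F := (complex.Re (fdot (M F) F)).

Lemma quad_bound (s : R) F G :
  2 * s * complex.Re (fdot (M F) G) <= s ^+ 2 * q F + q G.
Proof.
have := hpos ((-s)%:C *: F + G).
rewrite hlin fdotDl !fdotDr !fdotZl !fdotZr conj_real.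
rewrite (hherm G F) (fdotC (M F) G).
rewrite !mulrA -!rmorphM !Re_add !Re_realM Re_conj.
set a := complex.Re (fdot (M F) F); set b := complex.Re (fdot (M F) G).
set c := complex.Re (fdot (M G) G).
move=> h; rewrite -subr_ge0; apply: le_trans h _; rewrite le_eqVlt; apply/orP; left; apply/eqP.
ring.
Qed.

Lemma M_add F G : M (F + G) = M F + M G.
Proof. have := hlin 1 F G. rewrite !scale1r. done. Qed.
Lemma M_0 : M 0 = 0.
Proof.
have h := M_add 0 0; rewrite addr0 in h.
by apply: (addrI (M 0)); rewrite addr0 -h.
Qed.
Lemma M_sum (I : Type) (r : seq I) (P : pred I) (F : I -> mat) :
  M (\sum_(i <- r | P i) F i) = \sum_(i <- r | P i) M (F i).
Proof. elim/big_rec2: _ => [|i y1 y2 _ <-]; [exact: M_0 | exact: M_add]. Qed.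

Lemma quad_sum (I : finType) (P : pred I) (G : I -> mat) :
  q (\sum_(i | P i) G i) <= #|P|%:R * \sum_(i | P i) q (G i).
Proof.
rewrite M_sum fdot_suml Re_sum.
have h : forall i j, complex.Re (fdot (M (G i)) (G j)) <= (q (G i) + q (G j)) / 2.
  move=> i j; rewrite ler_pdivlMr // mulrC; have := quad_bound 1 (G i) (G j).
  by rewrite mulr1 expr1n mul1r.
apply: (@le_trans _ _ (\sum_(i | P i) \sum_(j | P j) (q (G i) + q (G j)) / 2)).
  apply: ler_sum => i _; rewrite fdot_sumr Re_sum; apply: ler_sum => j _; exact: h.
rewrite le_eqVlt; apply/orP; left; apply/eqP.
under eq_bigr do under eq_bigr do rewrite mulrDl.
under eq_bigr do rewrite big_split /= sumr_const.
rewrite big_split /= exchange_big /=.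
under [X in _ + X]eq_bigr do rewrite sumr_const.
rewrite -big_split /= mulr_sumr; apply: eq_bigr => i _.
by rewrite -mulrnDl -mulrDl -mulr2n -[q (G i) *+ 2]mulr_natr mulfK ?pnatr_eq0 // mulr_natl.
Qed.
End Quad.


Section Torus.
Variables (R : rcfType) (d m n l : nat).
Local Notation C := R[i].
Local Notation torus := 'rV['Z_n]_d.
Local Notation fld := (field R d m n).
Local Notation np := (Zp_trunc n).+2.

Lemma valZpD (a b : 'Z_n) : val (a + b) = ((val a + val b) %% np)%N.
Proof. by []. Qed.

Definition box (x y : torus) : bool := [forall j, (val ((y - x)%R ord0 j) <= l.-1)%N].

Lemma evecE (j j0 : 'I_d) : evec n j ord0 j0 = (j == j0)%:R.
Proof. by rewrite /evec mxE (eq_sym j0) ord1. Qed.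

Lemma notbox_inQ x y : ~~ box x y -> ~~ inQx l x y /\ forall j, ~~ inQx l x (y + evec n j).
Proof.
move=> /forallPn [j0]; rewrite -ltnNge => hj0; split.
  apply/forallP => /(_ j0) /andP [_ h]; by move: h; rewrite leqNgt hj0.
move=> j; apply/forallP => /(_ j0) /andP [h1 h2].
have e : (y + evec n j - x) ord0 j0 = (y - x) ord0 j0 + (j == j0)%:R.
  by rewrite addrAC !mxE (eq_sym j0) ord1.
move: h1 h2; rewrite e; case: eqP => _; last first.
  by rewrite addr0 => _; rewrite leqNgt hj0.
rewrite valZpD.
have v1 : val (1 : 'Z_n) = 1%N by rewrite /= modn_small.
rewrite v1; set a := val ((y - x) ord0 j0).
have ha : (a < np)%N by exact: ltn_ord.
case: (ltngtP (a + 1) np) => h.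
- rewrite modn_small // => _; lia.
- lia.
- by rewrite h modnn.
Qed.

Lemma grad_lin (a : C) (phi psi : fld) x :
  grad (a *: phi + psi) x = a *: grad phi x + grad psi x.
Proof.
apply/matrixP => i j; rewrite !mxE.
have E : forall y, (a *: phi + psi) y = a *: phi y + psi y.
  by move=> y; rewrite !ffunE.
rewrite !E !mxE; ring.
Qed.

Lemma grad_sum (I : Type) (r : seq I) (P : pred I) (F : I -> fld) x :
  grad (\sum_(i <- r | P i) F i) x = \sum_(i <- r | P i) grad (F i) x.
Proof.
have g0 : grad (0 : fld) x = 0.
  by have := grad_lin (-1) 0 0 x; rewrite scaler0 addr0 scaleN1r addNr.
have gD : forall phi psi : fld, grad (phi + psi) x = grad phi x + grad psi x.
  by move=> phi psi; have := grad_lin 1 phi psi x; rewrite !scale1r.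
exact: (big_morph (fun phi => grad phi x) gD g0).
Qed.

Lemma grad_box x (psi : fld) y : inH l x psi -> ~~ box x y -> grad psi y = 0.
Proof.
move=> [_ hpsi] /notbox_inQ [h1 h2]; apply/matrixP => i j.
by rewrite !mxE (hpsi _ h1) (hpsi _ (h2 j)) !mxE subrr.
Qed.

Lemma grad0_const (v : fld) : (forall y, grad v y = 0) -> forall y, v y = v 0.
Proof.
move=> hg.
have step : forall y j, v (y + evec n j) = v y.
  move=> y j; apply/matrixP => i k; rewrite (ord1 k).
  have := congr1 (fun M : 'M[C]_(m, d) => M i j) (hg y); rewrite !mxE => /eqP.
  by rewrite subr_eq0 => /eqP.
have stepk : forall k y j, v (y + evec n j *+ k) = v y.
  elim=> [|k IH] y j; first by rewrite mulr0n addr0.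
  by rewrite mulrS addrA IH step.
have hsum : forall (f : 'I_d -> nat) y, v (y + \sum_j evec n j *+ f j) = v y.
  move=> f; elim/big_rec: _ => [|j S _ IH] y; first by rewrite addr0.
  by rewrite addrA IH stepk.
move=> y; have ey : y = \sum_j evec n j *+ val (y ord0 j).
  apply/matrixP => i j; rewrite (ord1 i) summxE (bigD1 j) //= big1; last first.
    by move=> k hk; rewrite mulmxnE evecE (negbTE hk) mul0rn.
  by rewrite addr0 mulmxnE evecE eqxx natr_Zp.
rewrite ey -[X in v X = _]add0r; exact: hsum.
Qed.

Lemma const_zero (v : fld) : inX v -> (forall y, grad v y = 0) -> v = 0.
Proof.
move=> hX hg; have hc := grad0_const hg.
have h0 : v 0 = 0.
  move: hX; rewrite /inX; under eq_bigr do rewrite hc.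
  rewrite sumr_const -scaler_nat => /eqP; rewrite scaler_eq0 => /orP [|/eqP //].
  rewrite pnatr_eq0 => /eqP h.
  have : (0 < #|torus|)%N by apply/card_gt0P; exists 0.
  move: h; rewrite cardE => ->; done.
by apply/ffunP => y; rewrite hc h0 ffunE.
Qed.
End Torus.


Section Main.
Variables (R : rcfType) (d m n l : nat).
Local Notation C := R[i].
Local Notation mat := 'M[C]_(m, d).
Local Notation torus := 'rV['Z_n]_d.
Local Notation fld := (field R d m n).
Variables (A0 A1 : {linear 'M[R[i]]_(m, d) -> 'M[R[i]]_(m, d)}) (c0 : R).
Hypothesis hc0 : 0 < c0.
Hypothesis hA0herm : forall F G : 'M[R[i]]_(m, d), fdot (A0 F) G = fdot F (A0 G).
Hypothesis hA0coer : forall F : 'M[R[i]]_(m, d), c0 * fnorm F ^+ 2 <= complex.Re (fdot (A0 F) F).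
Hypothesis hA1 : forall F : 'M[R[i]]_(m, d), fnorm (A1 F) <= c0 / 2 * fnorm F.

Local Notation q0 F := (complex.Re (fdot (A0 F) F)).
Local Notation Re := complex.Re.
Implicit Types F G X : mat.

Lemma q0_ge0 F : 0 <= q0 F.
Proof. apply: le_trans (hA0coer F); apply: mulr_ge0; [exact: ltW | exact: sqr_ge0]. Qed.

Lemma q0_lin a F G : A0 (a *: F + G) = a *: A0 F + A0 G.
Proof. exact: linearP. Qed.

Lemma quadA0 (s : R) F G : 2 * s * Re (fdot (A0 F) G) <= s ^+ 2 * q0 F + q0 G.
Proof. exact: (quad_bound q0_lin hA0herm q0_ge0). Qed.

Lemma quadI (s : R) F G : 2 * s * Re (fdot F G) <= s ^+ 2 * Re (fdot F F) + Re (fdot G G).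
Proof.
apply: (@quad_bound R m d id) => //; last exact: Re_fdot_ge0.
Qed.

Lemma ReFF_le F : c0 * Re (fdot F F) <= q0 F.
Proof. by rewrite -fnorm_sqr. Qed.

Lemma X_bound (X F G : mat) (w : R) : 0 < w -> fnorm X <= c0 / 2 * fnorm F ->
  Re (fdot X G) <= w / 4 * q0 F + q0 G / (4 * w).
Proof.
move=> hw hX.
have hx : Re (fdot X X) <= c0 ^+ 2 / 4 * Re (fdot F F).
  rewrite -!fnorm_sqr.
  have h0 : 0 <= fnorm X by exact: sqrtr_ge0.
  have h0' : 0 <= fnorm F by exact: sqrtr_ge0.
  move: hX; set u := fnorm X; set v := fnorm F => hX.
  have : 0 <= c0 / 2 * v - u by rewrite subr_ge0.
  have : 0 <= c0 / 2 * v + u by apply: addr_ge0 => //; apply: mulr_ge0 => //; apply: divr_ge0; [exact: ltW|].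
  nra.
have h1 := quadI (2 * w / c0) X G.
have ha := ReFF_le F; have hb := ReFF_le G.
set r := Re (fdot X G) in h1 *; set x := Re (fdot X X) in h1 hx.
set a := Re (fdot F F) in hx ha; set b := Re (fdot G G) in h1 hb.
set qF := q0 F in ha *; set qG := q0 G in hb *.
set k := w / c0.
have hk : 0 < k by exact: divr_gt0.
have hwk : w = k * c0 by rewrite /k divfK // gt_eqF.
have e : 2 * (2 * w / c0) = 4 * k by rewrite /k; ring.
have e2 : (2 * w / c0) ^+ 2 = 4 * k ^+ 2 by rewrite /k; ring.
rewrite e e2 in h1.
have s1 : 4 * k ^+ 2 * x <= k ^+ 2 * c0 * qF.
  have : 4 * k ^+ 2 * x <= k ^+ 2 * c0 ^+ 2 * a.
    have : 0 <= k ^+ 2 by exact: sqr_ge0.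
    nra.
  move=> h; apply: le_trans h _.
  have : 0 <= k ^+ 2 * c0 by apply: mulr_ge0; [exact: sqr_ge0 | exact: ltW].
  nra.
have s2 : 4 * w * r <= w ^+ 2 * qF + qG.
  rewrite hwk.
  have : c0 * (4 * k * r) <= c0 * (4 * k ^+ 2 * x + b) by rewrite ler_pM2l.
  nra.
have h4w : 0 < 4 * w by apply: mulr_gt0.
rewrite -(ler_pM2l h4w); apply: le_trans s2 _.
rewrite le_eqVlt; apply/orP; left; apply/eqP; field.
by rewrite gt_eqF.
Qed.

Lemma fdotNr X Y : fdot X (- Y) = - fdot X Y.
Proof. by rewrite -scaleN1r fdotZr conjCN1 mulN1r. Qed.

Lemma fnormN X : fnorm (- X) = fnorm X.
Proof. by rewrite /fnorm fdotNl fdotNr opprK. Qed.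

Lemma Re_fdotN X G : Re (fdot (- X) G) = - Re (fdot X G).
Proof. by rewrite fdotNl Re_opp. Qed.

Lemma pt_bound F G :
  Re (fdot (A0 F) G) + Re (fdot (A1 F) G) - Re (fdot (A1 G) G)
    <= 9 / 4 * q0 F + 3 / 4 * q0 G.
Proof.
have h1 := quadA0 3 F G.
have h2 := X_bound G (ltr0Sn _ 2) (hA1 F).
have hG : fnorm (- A1 G) <= c0 / 2 * fnorm G by rewrite fnormN.
have h3 := X_bound G (ltr01 : (0 : R) < 1) hG.
rewrite Re_fdotN in h3.
lra.
Qed.

Lemma coer F : q0 F / 2 <= Re (fdot (A0 F + A1 F) F).
Proof.
have hF : fnorm (- A1 F) <= c0 / 2 * fnorm F by rewrite fnormN.
have h3 := X_bound F (ltr01 : (0 : R) < 1) hF.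
rewrite Re_fdotN in h3; rewrite fdotDl Re_add; lra.
Qed.

Lemma q0_eq0 F : q0 F = 0 -> F = 0.
Proof.
move=> h; have := ReFF_le F; rewrite h => h1.
have h2 := Re_fdot_ge0 F.
have hre : Re (fdot F F) = 0.
  apply/eqP; rewrite eq_le h2 andbT -(pmulr_rle0 _ hc0); exact: h1.
apply: fdot_eq0; have := fdot_ge0 F; rewrite lecE /= => /andP [/eqP him _].
move: hre him; case: (fdot F F) => a b /= -> ->; done.
Qed.
End Main.


Lemma exists_preimage (K : fieldType) (V : vectType K) (k : nat) (U : {vspace V})
  (g : V -> 'rV[K]_k) (glin : linear g) : k = \dim U ->
  (forall u, u \in U -> g u = 0 -> u = 0) -> forall w, exists2 u, u \in U & g u = w.
Proof.
move=> hk hinj w.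
pose gM := GRing.isLinear.Build _ _ _ _ g glin.
pose gL : {linear V -> 'rV[K]_k} := HB.pack g gM.
pose f := linfun gL.
have fE : forall u, f u = g u by move=> u; rewrite lfunE.
have h0 : (U :&: lker f)%VS = 0%VS.
  apply/eqP; rewrite -subv0; apply/subvP => u /memv_capP [hu]; rewrite memv_ker fE => /eqP hg.
  by rewrite (hinj u hu hg) mem0v.
have hd := limg_dim_eq h0.
have hsub : (f @: U <= fullv)%VS by exact: subvf.
have hEq : (f @: U == fullv)%VS.
  by rewrite -(dimv_leqif_eq hsub).2 hd dimvf /dim /= mul1n -hk.
have : w \in (f @: U)%VS by rewrite (eqP hEq) memvf.
by case/memv_imgP => u hu ->; exists u; rewrite ?fE.
Qed.

Section HSpace.
Variables (R : rcfType) (d m n l : nat).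
Local Notation C := R[i].
Local Notation torus := 'rV['Z_n]_d.
Local Notation fld := (field R d m n).

Lemma exists_H (x : torus) : exists U : {vspace fld}, forall psi, psi \in U <-> inH l x psi.
Proof.
pose r1 := fun phi : fld => [ffun y => if inQx l x y then 0 else phi y] : fld.
have r1lin : linear r1.
  move=> a u v; apply/ffunP => y; rewrite !ffunE; case: ifP => _ //.
  by rewrite scaler0 addr0.
pose r2 := fun phi : fld => \sum_y phi y.
have r2lin : linear r2.
  move=> a u v; rewrite /r2 scaler_sumr -big_split /=; apply: eq_bigr => y _.
  by rewrite !ffunE.
pose f1 := linfun (HB.pack r1 (GRing.isLinear.Build _ _ _ _ r1 r1lin) : {linear fld -> fld}).
pose f2 := linfun (HB.pack r2 (GRing.isLinear.Build _ _ _ _ r2 r2lin) : {linear fld -> 'cV[C]_m}).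
exists (lker f1 :&: lker f2)%VS => psi.
rewrite memv_cap !memv_ker !lfunE /=; split.
  move=> /andP [/eqP h1 /eqP h2]; split => // y hy.
  by have := congr1 (fun f : fld => f y) h1; rewrite ffunE (negbTE hy) ffunE.
move=> [h2 h1]; apply/andP; split; apply/eqP => //.
apply/ffunP => y; rewrite !ffunE; case: ifP => // hy; apply: h1; by rewrite hy.
Qed.
End HSpace.


Section Exist.
Variables (R : rcfType) (d m n l : nat).
Local Notation C := R[i].
Local Notation mat := 'M[C]_(m, d).
Local Notation torus := 'rV['Z_n]_d.
Local Notation fld := (field R d m n).
Variables (A0 A1 : {linear 'M[R[i]]_(m, d) -> 'M[R[i]]_(m, d)}) (c0 : R).
Hypothesis hc0 : 0 < c0.
Hypothesis hA0herm : forall F G : 'M[R[i]]_(m, d), fdot (A0 F) G = fdot F (A0 G).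
Hypothesis hA0coer : forall F : 'M[R[i]]_(m, d), c0 * fnorm F ^+ 2 <= complex.Re (fdot (A0 F) F).
Hypothesis hA1 : forall F : 'M[R[i]]_(m, d), fnorm (A1 F) <= c0 / 2 * fnorm F.
Local Notation Aop := (fun F : mat => A0 F + A1 F).
Local Notation q0 F := (complex.Re (fdot (A0 F) F)).
Local Notation Re := complex.Re.

Lemma grad_scale (a : C) (phi : fld) y : grad (a *: phi) y = a *: grad phi y.
Proof.
apply/matrixP => i j; rewrite !mxE.
have E : forall z, (a *: phi) z = a *: phi z by move=> z; rewrite !ffunE.
rewrite !E !mxE; ring.
Qed.

Lemma formA_linl a (u v psi : fld) :
  formA Aop (a *: u + v) psi = a * formA Aop u psi + formA Aop v psi.
Proof.
rewrite /formA mulr_sumr -big_split /=; apply: eq_bigr => y _.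
rewrite grad_lin !linearP !fdotDl !fdotZl; ring.
Qed.

Lemma formA_sumr (k : nat) (c : 'I_k -> C) (b : 'I_k -> fld) (u : fld) :
  formA Aop u (\sum_i c i *: b i) = \sum_i (c i)^* * formA Aop u (b i).
Proof.
rewrite /formA; under eq_bigr do rewrite grad_sum fdot_sumr.
rewrite exchange_big /=; apply: eq_bigr => i _.
rewrite mulr_sumr; apply: eq_bigr => y _; by rewrite grad_scale fdotZr.
Qed.

Lemma formA_coer (v : fld) : \sum_y q0 (grad v y) / 2 <= Re (formA Aop v v).
Proof. rewrite /formA Re_sum; apply: ler_sum => y _; exact: (coer hc0 hA0coer hA1 (grad v y)). Qed.

Lemma Pi_exists x (phi : fld) : exists v, isPi Aop l x phi v.
Proof.
case: (@exists_H R d m n l x) => U hU.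
pose b := vbasis U.
pose g := fun v : fld => \row_(i < \dim U) formA Aop v (b`_i).
have glin : linear g.
  by move=> a u v; apply/matrixP => i j; rewrite !mxE formA_linl.
have hinj : forall u, u \in U -> g u = 0 -> u = 0.
  move=> u hu hg.
  have hb : forall i : 'I_(\dim U), formA Aop u (b`_i) = 0.
    by move=> i; have := congr1 (fun M : 'rV[C]_(\dim U) => M 0 i) hg; rewrite !mxE.
  have h0 : formA Aop u u = 0.
    rewrite {2}(coord_vbasis hu) formA_sumr big1 // => i _; by rewrite hb mulr0.
  have hs := formA_coer u; rewrite h0 /= in hs.
  have hq : forall y, q0 (grad u y) = 0.
    move=> y; have : \sum_y q0 (grad u y) / 2 == 0.
      rewrite eq_le hs andTb; apply: sumr_ge0 => z _; apply: divr_ge0 => //.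
      exact: (q0_ge0 hc0 hA0coer).
    rewrite psumr_eq0; last first.
      by move=> z _; apply: divr_ge0 => //; exact: (q0_ge0 hc0 hA0coer).
    move=> /allP /(_ y (mem_index_enum _)) /implyP /(_ isT).
    by rewrite mulf_eq0 invr_eq0 pnatr_eq0 orbF => /eqP.
  have [hX _] := (hU u).1 hu.
  apply: const_zero hX _ => y; exact: (q0_eq0 hc0 hA0coer).
have [v hv hgv] := exists_preimage glin (erefl _) hinj (g phi).
exists v; split; first exact/hU.
move=> psi /hU hpsi.
rewrite (coord_vbasis hpsi) !formA_sumr; apply: eq_bigr => i _; congr (_ * _).
by have := congr1 (fun M : 'rV[C]_(\dim U) => M 0 i) hgv; rewrite !mxE.
Qed.

Lemma Pi_spec x (phi : fld) : isPi Aop l x phi (Pi Aop l x phi).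
Proof. rewrite /Pi; apply: epsilon_spec; exact: Pi_exists. Qed.
End Exist.


Lemma box_card (d n l : nat) (y : 'rV['Z_n]_d) : (0 < l)%N ->
  (#|[pred x : 'rV['Z_n]_d | box l x y]| <= l ^ d)%N.
Proof.
move=> hl.
pose f := fun x : 'rV['Z_n]_d => [ffun j : 'I_d => (inord (val ((y - x)%R ord0 j)) : 'I_(l.-1).+1)].
have finj : {in [pred x : 'rV['Z_n]_d | box l x y] &, injective f}.
  move=> x1 x2; rewrite !inE => /forallP h1 /forallP h2 /ffunP he.
  have e : (y - x1)%R = (y - x2)%R.
    apply/matrixP => i j; rewrite (ord1 i); apply: val_inj.
    have := congr1 val (he j); rewrite !ffunE /= !inordK ?ltnS ?(h1 j) ?(h2 j) //.
  by move/addrI: e => /oppr_inj.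
rewrite -(card_in_imset finj); apply: leq_trans (max_card _) _.
by rewrite card_ffun !card_ord prednK.
Qed.

Section Final.
Variables (R : rcfType) (d m n l : nat).
Local Notation C := R[i].
Local Notation mat := 'M[C]_(m, d).
Local Notation torus := 'rV['Z_n]_d.
Local Notation fld := (field R d m n).
Variables (A0 A1 : {linear 'M[R[i]]_(m, d) -> 'M[R[i]]_(m, d)}) (c0 : R).
Hypothesis hc0 : 0 < c0.
Hypothesis hA0herm : forall F G : 'M[R[i]]_(m, d), fdot (A0 F) G = fdot F (A0 G).
Hypothesis hA0coer : forall F : 'M[R[i]]_(m, d), c0 * fnorm F ^+ 2 <= complex.Re (fdot (A0 F) F).
Hypothesis hA1 : forall F : 'M[R[i]]_(m, d), fnorm (A1 F) <= c0 / 2 * fnorm F.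
Local Notation Aop := (fun F : mat => A0 F + A1 F).
Local Notation q0 F := (complex.Re (fdot (A0 F) F)).
Local Notation Re := complex.Re.

Definition N0 (w : fld) : R := \sum_y q0 (grad w y).

Lemma N0E (w : fld) : Re (formA A0 w w) = N0 w.
Proof. by rewrite /formA Re_sum. Qed.

Lemma perx x (phi : fld) :
  N0 (Pi Aop l x phi) <= 9 * \sum_(y | box l x y) q0 (grad phi y).
Proof.
have [hH hP] := Pi_spec l hc0 hA0coer hA1 x phi.
set v := Pi Aop l x phi in hH hP *.
have e := congr1 (@complex.Re R) (hP v hH).
rewrite /formA !Re_sum in e.
have e2 : N0 v = \sum_y (Re (fdot (A0 (grad phi y)) (grad v y)) +
     Re (fdot (A1 (grad phi y)) (grad v y)) - Re (fdot (A1 (grad v y)) (grad v y))).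
  have l1 : N0 v = \sum_y (Re (fdot (A0 (grad v y) + A1 (grad v y)) (grad v y))
                         - Re (fdot (A1 (grad v y)) (grad v y))).
    by apply: eq_bigr => y _; rewrite fdotDl Re_add addrK.
  rewrite l1 sumrB e -sumrB; apply: eq_bigr => y _.
  by rewrite fdotDl Re_add.
have hb : N0 v <= \sum_y (9 / 4 * (if box l x y then q0 (grad phi y) else 0) + 3 / 4 * q0 (grad v y)).
  rewrite e2; apply: ler_sum => y _; case: ifP => hy.
    exact: (pt_bound hc0 hA0herm hA0coer hA1).
  have g0 : grad v y = 0 by exact: (@grad_box R d m n l x v y hH (negbT hy)).
  have R0 : Re (0 : C) = 0 by [].
  by rewrite g0 !fdot0r R0 !mulr0 !addr0 subr0.
rewrite big_split /= -!mulr_sumr -big_mkcond /= in hb.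
rewrite -/(N0 v) in hb; lra.
Qed.

Lemma q0_scale (r : R) (S : mat) : q0 (r%:C *: S) = r ^+ 2 * q0 S.
Proof. by rewrite linearZ fdotZl fdotZr conj_real mulrA -rmorphM Re_realM expr2. Qed.

Lemma main_bound (phi : fld) : (0 < l)%N -> N0 (TA Aop l phi) <= 9 * N0 phi.
Proof.
move=> hl.
pose v := fun x => Pi Aop l x phi.
have hH : forall x, inH l x (v x) := fun x => (Pi_spec l hc0 hA0coer hA1 x phi).1.
pose K : R := (l ^ d)%:R.
have hK : 0 < K by rewrite ltr0n expn_gt0 hl.
pose r : R := K^-1.
have hc : (l%:R : C) ^- d = r%:C.
  by rewrite /r /K natrX fmorphV rmorphXn rmorph_nat.
have gT : forall y, grad (TA Aop l phi) y = r%:C *: \sum_(x | box l x y) grad (v x) y.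
  move=> y; rewrite /TA grad_scale grad_sum hc; congr (_ *: _).
  rewrite (bigID (fun x => box l x y)) /= [X in _ + X]big1 ?addr0 // => x hx.
  exact: (@grad_box R d m n l x (v x) y (hH x) hx).
have hq0 := q0_ge0 hc0 hA0coer.
have hcard : forall y : torus, (#|[pred x : torus | box l x y]|%:R : R) <= K.
  by move=> y; rewrite /K ler_nat; apply: box_card.
have s1 : N0 (TA Aop l phi) <= \sum_y r ^+ 2 * (K * \sum_x q0 (grad (v x) y)).
  rewrite /N0; apply: ler_sum => y _; rewrite gT q0_scale.
  apply: ler_wpM2l; first exact: sqr_ge0.
  apply: le_trans (quad_sum (linearP A0) hA0herm hq0 _ _) _.
  apply: ler_pM; [exact: ler0n | by apply: sumr_ge0 => x _ | exact: hcard |].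
  rewrite [X in _ <= X](bigID (fun x => box l x y)) /= lerDl.
  by apply: sumr_ge0 => x _.
have s2 : \sum_y r ^+ 2 * (K * \sum_x q0 (grad (v x) y)) = r ^+ 2 * K * \sum_x N0 (v x).
  rewrite -mulrA -!mulr_sumr; congr (_ * (_ * _)); exact: exchange_big.
have s3 : \sum_x N0 (v x) <= 9 * \sum_y (#|[pred x : torus | box l x y]|%:R * q0 (grad phi y)).
  apply: le_trans (ler_sum _ (fun x _ => perx x phi)) _.
  rewrite -mulr_sumr ler_wpM2l //; rewrite le_eqVlt; apply/orP; left; apply/eqP.
  under eq_bigr do rewrite big_mkcond /=.
  rewrite exchange_big /=; apply: eq_bigr => y _.
  rewrite -big_mkcond /= sumr_const mulr_natl.
  by congr (_ *+ _); apply: eq_card => x.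
have s4 : \sum_y (#|[pred x : torus | box l x y]|%:R * q0 (grad phi y)) <= K * N0 phi.
  rewrite /N0 mulr_sumr; apply: ler_sum => y _; apply: ler_wpM2r => //.
have hrK : r ^+ 2 * K * K = 1.
  by rewrite /r expr2 -!mulrA mulKf ?gt_eqF // mulVf // gt_eqF.
apply: le_trans s1 _; rewrite s2.
have h0 : 0 <= r ^+ 2 * K by apply: mulr_ge0; [exact: sqr_ge0 | exact: ltW].
apply: le_trans (ler_wpM2l h0 s3) _.
apply: le_trans (ler_wpM2l h0 (ler_wpM2l (ler0n _ 9) s4)) _.
by rewrite mulrCA (mulrA (r ^+ 2 * K) K) hrK mul1r.
Qed.
End Final.

Unset Implicit Arguments.
Theorem lemma5p4 (R : rcfType) (d m L N l : nat)
  (hd : (2 <= d)%N) (hm : (1 <= m)%N) (hL : (3 <= L)%N) (hLodd : odd L)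
  (hN : (1 <= N)%N) (hl : (3 <= l)%N) (hlL : (l.-1 < L ^ N)%N)
  (A0 A1 : {linear 'M[R[i]]_(m, d) -> 'M[R[i]]_(m, d)}) (c0 : R) (hc0 : 0 < c0)
  (hA0herm : forall F G : 'M[R[i]]_(m, d), fdot (A0 F) G = fdot F (A0 G))
  (hA0coer : forall F : 'M[R[i]]_(m, d), c0 * fnorm F ^+ 2 <= complex.Re (fdot (A0 F) F))
  (hA1 : forall F : 'M[R[i]]_(m, d), fnorm (A1 F) <= c0 / 2 * fnorm F)
  (phi : field R d m (L ^ N)) (hphi : inX phi) :
  normA A0 (TA (fun F => A0 F + A1 F) l phi) <= 9 * normA A0 phi.
Proof.
have hb := main_bound hc0 hA0herm hA0coer hA1 phi (leq_trans (isT : (0 < 3)%N) hl).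
rewrite /normA !N0E.
have hq0 := q0_ge0 hc0 hA0coer.
have h0 : 0 <= N0 A0 phi by apply: sumr_ge0 => y _.
have -> : (9 : R) = Num.sqrt (9 ^+ 2) by rewrite sqrtr_sqr ger0_norm.
rewrite -sqrtrM ?sqr_ge0 // ler_sqrt; last by apply: mulr_ge0 => //; exact: sqr_ge0.
apply: le_trans hb _; apply: ler_wpM2r => //; lra.
Qed.
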